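(* For all real numbers $a,b,c>0$, \[ \frac{a^{2}b}{(a+b)^{3}} + \frac{ac^{2}}{(a+c)^{3}} + \frac{b^{2}c}{(b+c)^{3}} \leq \frac{3}{8}. \] *)

(* Defs.v *)
From Stdlib Require Import Reals Lra.

(* Main.v *)
Require Import Defs.
From Stdlib Require Import Reals Lra Psatz.
Open Scope R_scope.

Ltac posi := repeat (first [lra | apply pow2_ge_0 | apply Rplus_le_le_0_compat | apply Rmult_le_pos | apply pow_le]).

Lemma Epos (a p q : R) : 0 <= a -> 0 <= p -> 0 <= q -> 0 <= 3*(a^0*p^3*q^6) + 9*(a^0*p^4*q^5) + 1*(a^0*p^5*q^4) + 3*(a^0*p^6*q^3) + 18*(a^1*p^2*q^6) + 82*(a^1*p^3*q^5) + 56*(a^1*p^4*q^4) + 10*(a^1*p^5*q^3) + 10*(a^1*p^6*q^2) + 28*(a^2*p^1*q^6) + 252*(a^2*p^2*q^5) + 396*(a^2*p^3*q^4) + 84*(a^2*p^4*q^3) + 36*(a^2*p^5*q^2) + 20*(a^2*p^6*q^1) + 16*(a^3*p^0*q^6) + 288*(a^3*p^1*q^5) + 992*(a^3*p^2*q^4) + 576*(a^3*p^3*q^3) + 48*(a^3*p^4*q^2) + 128*(a^3*p^5*q^1) + 16*(a^3*p^6*q^0) + 128*(a^4*p^0*q^5) + 976*(a^4*p^1*q^4) + 1376*(a^4*p^2*q^3) + 160*(a^4*p^3*q^2) + 304*(a^4*p^4*q^1) + 128*(a^4*p^5*q^0) + 384*(a^5*p^0*q^4) + 1280*(a^5*p^1*q^3)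 + 384*(a^5*p^2*q^2) + 256*(a^5*p^3*q^1) + 384*(a^5*p^4*q^0) + a^6*(p*(8*(8*p-q)^2+376*q^2)+512*q^3) + a^7*(256*((p-q)^2+p*q)).
Proof. intros; posi. Qed.

Lemma Lmin (a b c : R) (ha : 0 < a) (hb : 0 < b) (hc : 0 < c) (hab : a <= b) (hac : a <= c) :
  a ^ 2 * b / (a + b) ^ 3 + a * c ^ 2 / (a + c) ^ 3 + b ^ 2 * c / (b + c) ^ 3
  <= 3 / 8.
Proof.
  assert (H1 : 0 < (a+b)^3) by (apply pow_lt; lra).
  assert (H2 : 0 < (a+c)^3) by (apply pow_lt; lra).
  assert (H3 : 0 < (b+c)^3) by (apply pow_lt; lra).
  set (p := b - a). set (q := c - a).
  assert (HE := Epos a p q ltac:(lra) ltac:(unfold p; lra) ltac:(unfold q; lra)).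
  assert (Heq : 3/8 - (a ^ 2 * b / (a + b) ^ 3 + a * c ^ 2 / (a + c) ^ 3 + b ^ 2 * c / (b + c) ^ 3)
     = (3*(a^0*p^3*q^6) + 9*(a^0*p^4*q^5) + 1*(a^0*p^5*q^4) + 3*(a^0*p^6*q^3) + 18*(a^1*p^2*q^6) + 82*(a^1*p^3*q^5) + 56*(a^1*p^4*q^4) + 10*(a^1*p^5*q^3) + 10*(a^1*p^6*q^2) + 28*(a^2*p^1*q^6) + 252*(a^2*p^2*q^5) + 396*(a^2*p^3*q^4) + 84*(a^2*p^4*q^3) + 36*(a^2*p^5*q^2) + 20*(a^2*p^6*q^1) + 16*(a^3*p^0*q^6) + 288*(a^3*p^1*q^5) + 992*(a^3*p^2*q^4) + 576*(a^3*p^3*q^3) + 48*(a^3*p^4*q^2) + 128*(a^3*p^5*q^1) + 16*(a^3*p^6*q^0) + 128*(a^4*p^0*q^5) + 976*(a^4*p^1*q^4) + 1376*(a^4*p^2*q^3) + 160*(a^4*p^3*q^2) + 304*(a^4*p^4*q^1) + 128*(a^4*p^5*q^0) + 384*(a^5*p^0*q^4) + 1280*(a^5*p^1*q^3) + 384*(a^5*p^2*q^2) + 256*(a^5*p^3*q^1) + 384*(a^5*p^4*q^0) + a^6*(p*(8*(8*p-q)^2+376*q^2)+512*q^3) + a^7*(256*((p-q)^2+p*q))) / (8 * ((a+b)^3 * (a+c)^3 * (b+c)^3))).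
  { unfold p, q. field. lra. }
  assert (0 <= (3*(a^0*p^3*q^6) + 9*(a^0*p^4*q^5) + 1*(a^0*p^5*q^4) + 3*(a^0*p^6*q^3) + 18*(a^1*p^2*q^6) + 82*(a^1*p^3*q^5) + 56*(a^1*p^4*q^4) + 10*(a^1*p^5*q^3) + 10*(a^1*p^6*q^2) + 28*(a^2*p^1*q^6) + 252*(a^2*p^2*q^5) + 396*(a^2*p^3*q^4) + 84*(a^2*p^4*q^3) + 36*(a^2*p^5*q^2) + 20*(a^2*p^6*q^1) + 16*(a^3*p^0*q^6) + 288*(a^3*p^1*q^5) + 992*(a^3*p^2*q^4) + 576*(a^3*p^3*q^3) + 48*(a^3*p^4*q^2) + 128*(a^3*p^5*q^1) + 16*(a^3*p^6*q^0) + 128*(a^4*p^0*q^5) + 976*(a^4*p^1*q^4) + 1376*(a^4*p^2*q^3) + 160*(a^4*p^3*q^2) + 304*(a^4*p^4*q^1) + 128*(a^4*p^5*q^0) + 384*(a^5*p^0*q^4) + 1280*(a^5*p^1*q^3) + 384*(a^5*p^2*q^2) + 256*(a^5*p^3*q^1) + 384*(a^5*p^4*q^0) + a^6*(p*(8*(8*p-q)^2+376*q^2)+512*q^3) + a^7*(256*((p-q)^2+p*q))) / (8 * ((a+b)^3 * (a+c)^3 * (b+c)^3))).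
  { unfold Rdiv; apply Rmult_le_pos; [exact HE|]. left; apply Rinv_0_lt_compat. apply Rmult_lt_0_compat; [lra|].
    apply Rmult_lt_0_compat; [apply Rmult_lt_0_compat|]; assumption. }
  lra.
Qed.

Lemma rot (a b c : R) (ha : 0 < a) (hb : 0 < b) (hc : 0 < c) :
  a ^ 2 * b / (a + b) ^ 3 + a * c ^ 2 / (a + c) ^ 3 + b ^ 2 * c / (b + c) ^ 3
  = b ^ 2 * c / (b + c) ^ 3 + b * a ^ 2 / (b + a) ^ 3 + c ^ 2 * a / (c + a) ^ 3.
Proof.
  rewrite (Rplus_comm b a), (Rplus_comm c a), (Rmult_comm b (a^2)), (Rmult_comm (c^2) a). lra.
Qed.

Theorem mainTheorem9 (a b c : R) (ha : 0 < a) (hb : 0 < b) (hc : 0 < c) :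
  a ^ 2 * b / (a + b) ^ 3 + a * c ^ 2 / (a + c) ^ 3 + b ^ 2 * c / (b + c) ^ 3
  <= 3 / 8.
Proof.
  pose proof (rot a b c ha hb hc). pose proof (rot b c a hb hc ha).
  destruct (Rle_dec a b); destruct (Rle_dec a c); destruct (Rle_dec b c).
  all: first [ now apply Lmin; lra
             | pose proof (Lmin b c a hb hc ha ltac:(lra) ltac:(lra)); lra
             | pose proof (Lmin c a b hc ha hb ltac:(lra) ltac:(lra)); lra
             | exfalso; lra ].
Qed.
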